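(* Let $\delta\in[\frac{\sqrt2}{2},1)$ and $p\in(0,1)$. Define $$h(p)=\begin{cases}1-0.5p, & p\in(0,p^{\star}],\\ 1-0.62p, & p\in(p^{\star},1),\end{cases}\qquad C(p)=\begin{cases}\left(\dfrac{\big((2-\delta)^{1-\frac{2}{p}}+2\delta\big)g(p)}{1-\delta}\right)^{p/2}, & p\in(0,p^{\star}],\\[2ex] \left(\dfrac{(2-\delta)^{1-\frac{2}{p}}g(p)+2^{2-\frac{2}{p}}\delta}{1-\delta}\right)^{p/2}, & p\in(p^{\star},1).\end{cases}$$ If $\delta\le h(p)$, then $C(p)<1$.
   Context: $g(p)=\frac{p}{2}(1-\frac{p}{2})^{\frac{2}{p}-1}$ for $p\in(0,1]$. $p^{\star}\approx0.45418$ is the unique solution in $(0,1]$ of $(\frac{p}{2})^{1/2}(2-p)^{\frac1p-\frac12}=1$. *)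

(* Defs.v *)
From Stdlib Require Import Reals.
Open Scope R_scope.

Definition g (p : R) : R := p / 2 * Rpower (1 - p / 2) (2 / p - 1).

Definition pstar_eq (p : R) : Prop :=
  Rpower (p / 2) (1 / 2) * Rpower (2 - p) (1 / p - 1 / 2) = 1.

Definition is_pstar (ps : R) : Prop :=
  0 < ps <= 1 /\ pstar_eq ps /\ (forall q, 0 < q <= 1 -> pstar_eq q -> q = ps).

Definition hfun (ps p : R) : R :=
  if Rle_dec p ps then 1 - 0.5 * p else 1 - 0.62 * p.

Definition Cfun (ps delta p : R) : R :=
  if Rle_dec p ps then
    Rpower ((Rpower (2 - delta) (1 - 2 / p) + 2 * delta) * g p / (1 - delta)) (p / 2)
  else
    Rpower ((Rpower (2 - delta) (1 - 2 / p) * g p + Rpower 2 (2 - 2 / p) * delta)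
             / (1 - delta)) (p / 2).

(* Main.v *)
Require Import Defs.
From Stdlib Require Import Reals Lra Psatz.
From Coquelicot Require Import Coquelicot.
Open Scope R_scope.

Lemma exp_T3 x : 0 <= x -> 1 + x + x^2/2 + x^3/6 <= exp x.
Proof.
  intros Hx.
  set (An := fun N:nat => / INR (Factorial.fact N) * x ^ N).
  assert (Hc : Un_cv (fun n:nat => sum_f_R0 An n) (exp x)).
  { unfold exp; unfold projT1; case (exist_exp x); intro.
    unfold exp_in; unfold infinite_sum, Un_cv; trivial. }
  assert (H := sum_incr An 3 (exp x) Hc).
  assert (Hp : forall n, 0 <= An n).
  { intro n; unfold An; apply Rmult_le_pos.
    left; apply Rinv_0_lt_compat; apply INR_fact_lt_0.
    apply pow_le; auto. }
  specialize (H Hp).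
  simpl in H; unfold An in H; simpl in H.
  replace (1 + x + x^2/2 + x^3/6) with (/ 1 * 1 + / 1 * (x * 1) + / (1+1) * (x * (x * 1)) +
        / ((1+1+1) * (1+1)) * (x * (x * (x * 1)))) by (field).
  lra.
Qed.

Lemma L1 q : 0 <= q < 1 -> ln (1 - q) <= - q - q^2/2.
Proof.
  intros [H0 H1].
  set (f := fun t => (1 - t) * exp (t + t^2/2)).
  assert (Hf : f q <= f 0).
  { destruct (Req_dec q 0) as [->|Hq]; [lra|].
    destruct (MVT_cor2 f (fun t => - t^2 * exp (t + t^2/2)) 0 q) as [c [Hc1 Hc2]]; [lra| |].
    { intros c _. apply is_derive_Reals. unfold f. auto_derive; auto. replace (exp (c + c*(c*1)*/2)) with (exp (c + c^2/2)) by (f_equal; ring). field. }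
    assert (0 <= c^2 * exp (c + c^2/2)) by (apply Rmult_le_pos; [nra| left; apply exp_pos]).
    nra. }
  unfold f in Hf. replace (0 + 0^2/2) with 0 in Hf by field. rewrite exp_0 in Hf.
  assert (E : 1 - q <= exp (- q - q^2/2)).
  { replace (-q - q^2/2) with (- (q + q^2/2)) by ring. rewrite exp_Ropp.
    assert (0 < exp (q + q^2/2)) by apply exp_pos.
    apply (Rmult_le_reg_r (exp (q + q^2/2))); auto.
    rewrite Rinv_l; lra. }
  rewrite <- (ln_exp (-q - q^2/2)).
  destruct E as [E|E]; [left; apply ln_increasing; lra | right; now rewrite E].
Qed.

Lemma L2 q : 0 <= q -> q - q^2/2 <= ln (1 + q).
Proof.
  intros H0.
  set (f := fun t => (1 + t) * exp (- t + t^2/2)).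
  assert (Hf : f 0 <= f q).
  { destruct (Req_dec q 0) as [->|Hq]; [lra|].
    destruct (MVT_cor2 f (fun t => t^2 * exp (- t + t^2/2)) 0 q) as [c [Hc1 Hc2]]; [lra| |].
    { intros c _. apply is_derive_Reals. unfold f. auto_derive; auto. replace (exp (- c + c*(c*1)*/2)) with (exp (- c + c^2/2)) by (f_equal; field). field. }
    assert (0 <= c^2 * exp (- c + c^2/2)) by (apply Rmult_le_pos; [nra| left; apply exp_pos]).
    nra. }
  unfold f in Hf. replace (- 0 + 0^2/2) with 0 in Hf by field. rewrite exp_0 in Hf.
  assert (E : exp (q - q^2/2) <= 1 + q).
  { replace (- q + q^2/2) with (- (q - q^2/2)) in Hf by ring. rewrite exp_Ropp in Hf.
    assert (0 < exp (q - q^2/2)) by apply exp_pos.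
    apply (Rmult_le_reg_r (/ exp (q - q^2/2))). apply Rinv_0_lt_compat; auto.
    rewrite Rinv_r; lra. }
  rewrite <- (ln_exp (q - q^2/2)).
  destruct E as [E|E]; [left; apply ln_increasing; [apply exp_pos|lra] | right; now rewrite E].
Qed.

Lemma Rpower_lt1 x y : 0 < x < 1 -> 0 < y -> Rpower x y < 1.
Proof.
  intros [H0 H1] Hy. unfold Rpower. rewrite <- exp_0. apply exp_increasing.
  assert (ln x < 0) by (rewrite <- ln_1; apply ln_increasing; lra). nra.
Qed.


Lemma exp_T2 x : 0 <= x -> 1 + x + x^2/2 <= exp x.
Proof. intros Hx. assert (H := exp_T3 x Hx). assert (0 <= x^3) by (apply pow_le; auto). lra. Qed.

Lemma F2 q : 0 < q -> q < 0.293 ->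
  0 < 1/4 + q - 33/8*q^2 + 5*q^3 - 191/64*q^4 + 15/16*q^5 - 1/32*q^6 - 1/16*q^7 + 1/64*q^8.
Proof. intros H0 H1.
  assert (0 <= q^2) by nra. assert (q^3 <= 0.293*q^2) by nra.
  assert (0<= q^3) by nra. assert (q^4 <= 0.293*q^3) by nra. assert (0<=q^4) by nra.
  assert (q^5 <= 0.293*q^4) by nra. assert (0<=q^5) by nra.
  assert (q^6 <= 0.293*q^5) by nra. assert (0<=q^6) by nra.
  assert (q^7 <= 0.293*q^6) by nra. assert (0<=q^7) by nra. assert (0<=q^8) by nra.
  nra.
Qed.

Lemma exp_le_inv x y : 0 < y -> y <= exp x -> exp (- x) <= / y.
Proof. intros Hy H. rewrite exp_Ropp. apply Rinv_le_contravar; auto. Qed.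

Lemma case1 delta p : 0.7071 < delta < 1 -> 0 < p < 1 -> delta <= 1 - 0.5 * p ->
  (Rpower (2 - delta) (1 - 2 / p) + 2 * delta) * g p < 1 - delta.
Proof.
  intros [Hd1 Hd2] [Hp1 Hp2] Hh.
  set (q := p / 2).
  assert (Hq0 : 0 < q) by (unfold q; lra).
  assert (Hq1 : q < 0.293) by (unfold q; lra).
  set (a := (1-q)*(1+q/2)). set (b := (1-q)*(1-q/2)).
  assert (Ha : 0 <= a) by (unfold a; nra). assert (Hb : 0 <= b) by (unfold b; nra).
  set (ta := 1 + a + a^2/2). set (tb := 1 + b + b^2/2).
  assert (Hta : 1 <= ta) by (unfold ta; nra). assert (Htb : 1 <= tb) by (unfold tb; nra).
  assert (HX : Rpower (2 - delta) (1 - 2 / p) <= / tb).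
  { unfold Rpower. replace ((1 - 2/p) * ln (2 - delta)) with (- ((2/p - 1) * ln (2 - delta))) by ring.
    apply exp_le_inv; [lra|]. apply Rle_trans with (exp b).
    - apply exp_T2; auto.
    - assert (H := L2 q ltac:(lra)).
      assert (ln (1 + q) <= ln (2 - delta)).
      { destruct (Req_dec (1+q) (2-delta)) as [E|E]; [rewrite E; lra|].
        left; apply ln_increasing; unfold q in *; lra. }
      assert (E : b = (2/p - 1) * (q - q^2/2)) by (unfold b, q; field; lra).
      assert (Hn : 0 <= 2/p - 1).
      { assert (2/p >= 2) by (apply Rle_ge; apply (Rmult_le_reg_r p); [lra|]; field_simplify; lra). lra. }
      destruct (Rle_lt_or_eq_dec _ _ (Rmult_le_compat_l (2/p-1) _ _ Hn (Rle_trans _ _ _ H H0))) as [L|L].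
      + left; apply exp_increasing; rewrite E; exact L.
      + rewrite E, L; lra. }
  assert (HG : g p <= q * / ta).
  { unfold g. fold q. apply Rmult_le_compat_l; [lra|].
    unfold Rpower. replace ((2/p - 1) * ln (1 - q)) with (- ((2/p - 1) * - ln (1 - q))) by ring.
    apply exp_le_inv; [lra|]. apply Rle_trans with (exp a).
    - apply exp_T2; auto.
    - assert (H := L1 q ltac:(lra)).
      assert (E : a = (2/p - 1) * (q + q^2/2)) by (unfold a, q; field; lra).
      assert (Hn : 0 <= 2/p - 1).
      { assert (2/p >= 2) by (apply Rle_ge; apply (Rmult_le_reg_r p); [lra|]; field_simplify; lra). lra. }
      assert (HH : (2/p - 1) * (q + q^2/2) <= (2/p-1) * - ln (1 - q)) by (apply Rmult_le_compat_l; lra).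
      destruct (Rle_lt_or_eq_dec _ _ HH) as [L|L].
      + left; apply exp_increasing; rewrite E; exact L.
      + rewrite E, L; lra. }
  assert (HX0 : 0 < Rpower (2 - delta) (1 - 2 / p)) by (unfold Rpower; apply exp_pos).
  assert (HG0 : 0 < g p).
  { unfold g. apply Rmult_lt_0_compat; [lra|]. unfold Rpower; apply exp_pos. }
  assert (HF := F2 q Hq0 Hq1).
  assert (EF : ta * tb - 1 - (2 - 2*q) * tb =
     1/4 + q - 33/8*q^2 + 5*q^3 - 191/64*q^4 + 15/16*q^5 - 1/32*q^6 - 1/16*q^7 + 1/64*q^8)
    by (unfold ta, tb, a, b; field).
  assert (K1 : Rpower (2 - delta) (1 - 2 / p) + 2 * delta <= / tb + (2 - 2*q)) by (unfold q in *; lra).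
  assert (K2 : / tb + (2 - 2*q) < ta).
  { apply (Rmult_lt_reg_r tb); [lra|]. rewrite Rmult_plus_distr_r, Rinv_l by lra. lra. }
  set (X := Rpower (2 - delta) (1 - 2 / p)) in *.
  assert (HtaI : 0 < / ta) by (apply Rinv_0_lt_compat; lra).
  apply Rle_lt_trans with ((/ tb + (2 - 2*q)) * (q * / ta)).
  { apply Rmult_le_compat; lra. }
  apply Rlt_le_trans with (ta * (q * / ta)).
  { apply Rmult_lt_compat_r; [nra| lra]. }
  replace (ta * (q * / ta)) with q by (field; lra). unfold q in *; lra.
Qed.

Lemma exp_le_mono x y : x <= y -> exp x <= exp y.
Proof. intros [H|H]; [left; apply exp_increasing; auto| rewrite H; lra]. Qed.

Lemma case2 delta p : 0.7071 < delta < 1 -> 0 < p < 1 -> delta <= 1 - 0.62 * p ->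
  Rpower (2 - delta) (1 - 2 / p) * g p + Rpower 2 (2 - 2 / p) * delta < 1 - delta.
Proof.
  intros [Hd1 Hd2] [Hp1 Hp2] Hh.
  set (q := p / 2).
  assert (Hq0 : 0 < q) by (unfold q; lra).
  assert (Hq1 : q < 0.237) by (unfold q; lra).
  assert (Hu : 2 / p = / q) by (unfold q; field; lra).
  assert (Hu4 : 4 <= / q).
  { apply (Rmult_le_reg_r q); [lra|]. rewrite Rinv_l by lra. lra. }
  set (a := (1-q)*(1+q/2)).
  assert (Ha : 0.85 <= a) by (unfold a; nra).
  set (ta := 1 + a + a^2/2).
  assert (Hta : 2.2 <= ta) by (unfold ta; nra).
  assert (HX : Rpower (2 - delta) (1 - 2 / p) <= 1).
  { unfold Rpower. replace 1 with (exp 0) at 2 by apply exp_0. apply exp_le_mono.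
    assert (0 < ln (2 - delta)) by (rewrite <- ln_1; apply ln_increasing; lra).
    rewrite Hu. assert (1 - / q <= 0) by lra. nra. }
  assert (HG : g p <= q * / ta).
  { unfold g. fold q. apply Rmult_le_compat_l; [lra|].
    unfold Rpower. replace ((2/p - 1) * ln (1 - q)) with (- ((2/p - 1) * - ln (1 - q))) by ring.
    apply exp_le_inv; [lra|]. apply Rle_trans with (exp a).
    - apply exp_T2; lra.
    - apply exp_le_mono.
      assert (H := L1 q ltac:(lra)).
      assert (E : a = (2/p - 1) * (q + q^2/2)) by (unfold a, q; field; lra).
      rewrite E. apply Rmult_le_compat_l; lra. }
  assert (HY : Rpower 2 (2 - 2 / p) <= / (2 * / q - 4)).
  { unfold Rpower. replace ((2 - 2/p) * ln 2) with (- ((/q - 2) * ln 2)) by (rewrite Hu; ring).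
    apply exp_le_inv; [nra|].
    replace ((/q - 2) * ln 2) with (ln 2 + ln 2 + (/q - 4) * ln 2) by ring.
    rewrite !exp_plus, exp_ln by lra.
    assert (H1 := exp_ineq1_le ((/q - 4) * ln 2)).
    assert (H2 := ln_lt_2). nra. }
  assert (HX0 : 0 < Rpower (2 - delta) (1 - 2 / p)) by (unfold Rpower; apply exp_pos).
  assert (HG0 : 0 < g p).
  { unfold g. apply Rmult_lt_0_compat; [lra|]. unfold Rpower; apply exp_pos. }
  assert (HZ : / (2 * / q - 4) = q / (2 - 4 * q)).
  { replace (2 * / q - 4) with ((2 - 4*q) / q) by (field; lra). field; lra. }
  rewrite HZ in HY.
  assert (HtaI : / ta <= 1/2.2) by (unfold Rdiv; rewrite Rmult_1_l; apply Rinv_le_contravar; lra).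
  assert (K : delta * (q / (2 - 4 * q)) < 1 - delta - 0.4546 * q).
  { apply (Rmult_lt_reg_r (2 - 4*q)); [lra|].
    replace (delta * (q / (2 - 4 * q)) * (2 - 4 * q)) with (delta * q) by (field; lra).
    unfold q in *. nra. }
  assert (Rpower (2 - delta) (1 - 2 / p) * g p <= 0.4546 * q) by nra.
  assert (Rpower 2 (2 - 2 / p) * delta <= q / (2 - 4 * q) * delta) by (apply Rmult_le_compat_r; lra).
  lra.
Qed.

Lemma sqrt2_lb : 1.41421 < sqrt 2.
Proof.
  destruct (Rlt_or_le 1.41421 (sqrt 2)) as [h|h]; auto.
  assert (H := sqrt_sqrt 2 ltac:(lra)). assert (H' := sqrt_pos 2). nra.
Qed.

Lemma div_lt1 x y : 0 < y -> x < y -> x / y < 1.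
Proof. intros Hy H. apply (Rmult_lt_reg_r y); auto. unfold Rdiv. rewrite Rmult_assoc, Rinv_l by lra. lra. Qed.

Theorem lemma1 (ps delta p : R) :
  is_pstar ps ->
  sqrt 2 / 2 <= delta < 1 ->
  0 < p < 1 ->
  delta <= hfun ps p ->
  Cfun ps delta p < 1.
Proof.
  intros _ Hd Hp Hh.
  assert (H2 := sqrt2_lb). assert (Hd' : 0.7071 < delta < 1) by lra.
  assert (HG0 : 0 < g p).
  { unfold g. apply Rmult_lt_0_compat; [lra|]. unfold Rpower; apply exp_pos. }
  assert (HX0 : 0 < Rpower (2 - delta) (1 - 2 / p)) by (unfold Rpower; apply exp_pos).
  assert (HY0 : 0 < Rpower 2 (2 - 2 / p)) by (unfold Rpower; apply exp_pos).
  unfold Cfun, hfun in *. destruct (Rle_dec p ps) as [Hle|Hgt].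
  - apply Rpower_lt1; [|lra]. split.
    + apply Rdiv_lt_0_compat; [apply Rmult_lt_0_compat|]; lra.
    + apply div_lt1; [lra|]. apply case1; lra.
  - apply Rpower_lt1; [|lra]. split.
    + apply Rdiv_lt_0_compat; [|lra]. nra.
    + apply div_lt1; [lra|]. apply case2; lra.
Qed.
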